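(* For all $m,n\in\mathbb{N}$ and every $\boldsymbol{\gamma}\in[0,1)^m$, $\Omega^{\boldsymbol{\gamma}}(m,n)\subset\mathbf{Sing}^{\boldsymbol{\gamma}}_{m,n}(1)$.
   Context: $[0,1)^{m\times n}$ is the set of real $m\times n$ matrices with entries in $[0,1)$. For $\boldsymbol{x}\in\mathbb{R}^n$, $\|\boldsymbol{x}\|=\max_i|x_i|$; for $\boldsymbol{y}\in\mathbb{R}^m$, $\langle\boldsymbol{y}\rangle=\min_{\boldsymbol{p}\in\mathbb{Z}^m}\|\boldsymbol{y}-\boldsymbol{p}\|$. For $\psi:\mathbb{N}\to[0,\infty)$, $W_{m,n}(\psi)$ is the set of pairs $(A,\boldsymbol{\gamma})$ such that $\langle A\boldsymbol{q}-\boldsymbol{\gamma}\rangle<\psi(\|\boldsymbol{q}\|)$ for infinitely many $\boldsymbol{q}\in\mathbb{Z}^n$. ''Decreasing'' means non-increasing. $\mathcal{D}$ is the set of decreasing $\psi:\mathbb{N}\to[0,\infty)$ with $\sum_{q\ge1}q^{n-1}\psi(q)^m=\infty$; $\Omega(m,n)=\bigcap_{\psi\in\mathcal{D}}W_{m,n}(\psi)$ and $\Omega^{\boldsymbol{\gamma}}(m,n)=\{A:(A,\boldsymbol{\gamma})\in\Omega(m,n)\}$. For a decreasing $\psi:\mathbb{N}\to[0,\infty)$, $A\in[0,1)^{m\times n}$ belongs to $D^{\boldsymbol{\gamma}}_{m,n}(\psi)$ if for all sufficiently large $T$ there exists $\boldsymbol{q}\in\mathbb{Z}^n$ with $\langle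 A\boldsymbol{q}-\boldsymbol{\gamma}\rangle^m<\psi(T)$ and $1\le\|\boldsymbol{q}\|^n\le T$. With $\psi_1(T)=T^{-1}$, $\mathbf{Sing}^{\boldsymbol{\gamma}}_{m,n}(1)=\bigcap_{\epsilon>0}D^{\boldsymbol{\gamma}}_{m,n}(\epsilon\psi_1)$. *)

(* Defs.v *)
From HB Require Import structures.
From mathcomp Require Import all_boot all_order all_algebra.
From mathcomp Require Import all_classical all_reals all_analysis.
Set Implicit Arguments. Unset Strict Implicit. Unset Printing Implicit Defensive.
Import Order.TTheory GRing.Theory Num.Theory.
Local Open Scope ring_scope.
Local Open Scope classical_set_scope.

Section Defs.
Variable R : realType.

Definition unit_box (m n : nat) (A : 'M[R]_(m, n)) : Prop :=
  forall i j, 0 <= A i j /\ A i j < 1.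

Definition normZ (n : nat) (q : 'cV[int]_n) : nat := \max_(i < n) `|q i ord0|%N.

Definition normR (m : nat) (y : 'cV[R]_m) : R := \big[Num.max/0]_(i < m) `|y i ord0|.

Definition distZ (m : nat) (y : 'cV[R]_m) : R :=
  inf [set normR (y - map_mx (fun z : int => z%:~R) p) | p in [set: 'cV[int]_m]].

Definition AqG (m n : nat) (A : 'M[R]_(m, n)) (q : 'cV[int]_n) (g : 'cV[R]_m)
  : 'cV[R]_m := A *m map_mx (fun z : int => z%:~R) q - g.

Definition decreasing_fn (psi : nat -> R) : Prop :=
  (forall k, 0 <= psi k) /\ (forall a b, (0 < a)%N -> (a <= b)%N -> psi b <= psi a).

Definition W (m n : nat) (psi : nat -> R) (A : 'M[R]_(m, n)) (g : 'cV[R]_m) : Prop :=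
  infinite_set [set q : 'cV[int]_n | distZ (AqG A q g) < psi (normZ q)].

Definition D_class (m n : nat) (psi : nat -> R) : Prop :=
  decreasing_fn psi /\
  (\sum_(1 <= q <oo) (((q%:R : R) ^+ (n - 1) * psi q ^+ m)%:E) = +oo)%E.

Definition Omega_g (m n : nat) (g : 'cV[R]_m) (A : 'M[R]_(m, n)) : Prop :=
  unit_box A /\ forall psi, D_class m n psi -> W psi A g.

Definition Dg (m n : nat) (g : 'cV[R]_m) (psi : nat -> R) (A : 'M[R]_(m, n)) : Prop :=
  unit_box A /\
  exists T0 : nat, forall T : nat, (T0 <= T)%N ->
    exists q : 'cV[int]_n,
      distZ (AqG A q g) ^+ m < psi T /\ (1 <= normZ q ^ n <= T)%N.

Definition psi1 (T : nat) : R := (T%:R)^-1.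

Definition Sing1 (m n : nat) (g : 'cV[R]_m) (A : 'M[R]_(m, n)) : Prop :=
  forall eps : R, 0 < eps -> Dg g (fun T => eps * psi1 T) A.

End Defs.

(* Main.v *)
Require Import Defs.
From HB Require Import structures.
From mathcomp Require Import all_boot all_order all_algebra.
From mathcomp Require Import all_classical all_reals all_analysis.
From mathcomp Require Import lra zify.
Import Order.TTheory GRing.Theory Num.Theory.
Local Open Scope ring_scope.

Lemma normR_ge0 (R : realType) m (y : 'cV[R]_m) : 0 <= normR y.
Proof.
rewrite /normR; elim/big_ind: _ => // x z hx hz.
by rewrite le_max hx.
Qed.

Lemma distZ_ge0 (R : realType) m (y : 'cV[R]_m) : 0 <= distZ y.
Proof.
rewrite /distZ; apply: lb_le_inf.
  by exists (normR (y - map_mx (fun z : int => z%:~R) 0)); exists 0.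
by move=> _ [p _ <-]; exact: normR_ge0.
Qed.

Lemma normZ0 n (q : 'cV[int]_n) : normZ q = 0%N -> q = 0.
Proof.
move=> h; apply/matrixP => i j; rewrite !mxE (ord1 j).
have : (`|q i ord0|%N <= normZ q)%N by exact: (leq_bigmax i).
by rewrite h leqn0 absz_eq0 => /eqP.
Qed.

Lemma tele_step (x n : nat) : (0 < n)%N -> ((x+1)^n <= x^n + n * (x+1)^(n-1))%N.
Proof.
case: n => // n _; rewrite subn1 /=.
elim: n => [|n IH]; first by rewrite !expn1 expn0; lia.
rewrite (expnS (x+1)) (expnS x).
have h2 : (x * (x+1)^n <= (x+1)^n.+1)%N by rewrite expnS leq_mul2r leq_addr orbT.
nia.
Qed.

Lemma tele (a d n : nat) : (0 < n)%N ->
  ((a+d)^n <= a^n + n * \sum_(a.+1 <= j < (a+d).+1) j^(n-1))%N.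
Proof.
move=> hn; elim: d => [|d IH]; first by rewrite addn0 big_geq // muln0 addn0.
rewrite addnS big_nat_recr /=; last by rewrite ltnS leq_addr.
have := @tele_step (a+d) n hn; rewrite addn1 => h.
rewrite mulnDr; lia.
Qed.

Section Main.
Variable R : realType.

Definition rt (m : nat) (x : R) : R := x `^ (m%:R^-1).

Lemma rt_ge0 m x : 0 <= rt m x.
Proof. exact: powR_ge0. Qed.

Lemma rtK m x : (0 < m)%N -> 0 <= x -> rt m x ^+ m = x.
Proof.
move=> hm hx; rewrite /rt -powR_mulrn ?powR_ge0 // -powRrM mulVf ?powRr1 //.
by rewrite pnatr_eq0 -lt0n.
Qed.

Lemma rt_le m x y : (0 < m)%N -> 0 <= x -> x <= y -> rt m x <= rt m y.
Proof.
move=> hm hx hxy; rewrite -(ler_pXn2r hm) ?nnegrE ?rt_ge0 //.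
by rewrite !rtK // (le_trans hx).
Qed.

Lemma rt_lower m x d : (0 < m)%N -> 0 <= x -> 0 <= d -> x <= d ^+ m -> rt m x <= d.
Proof.
move=> hm hx hd h; rewrite -(ler_pXn2r hm) ?nnegrE ?rt_ge0 //.
by rewrite rtK.
Qed.

End Main.
Arguments rt {R}.

Lemma le_pow_self N n : (0 < n)%N -> (N <= N ^ n)%N.
Proof.
move=> hn; case: N => // N.
by rewrite -{1}(expn1 N.+1) leq_pexp2l.
Qed.

Theorem lemma3p1 (R : realType) (m n : nat) (hm : (0 < m)%N) (hn : (0 < n)%N)
  (g : 'cV[R]_m) (hg : forall i, 0 <= g i ord0 /\ g i ord0 < 1)
  (A : 'M[R]_(m, n)) :
  Omega_g g A -> Sing1 g A.
Proof.
move=> [hbox hW] eps heps; split => //.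
apply: contrapT => hnot.
have bad : forall T0 : nat, exists T : nat, (T0 <= T)%N /\
    forall q : 'cV[int]_n, (1 <= normZ q ^ n <= T)%N ->
      eps * psi1 R T <= distZ (AqG A q g) ^+ m.
  move=> T0; apply: contrapT => hb; apply: hnot; exists T0 => T hT.
  apply: contrapT => hq; apply: hb; exists T; split => // q hq1.
  rewrite leNgt; apply/negP => hlt; apply: hq; exists q; split => //.
pose D (N : nat) : R := ((2 * N) ^ n)%:R.
have goodN : forall N0 : nat, exists N : nat, [/\ (N0 <= N)%N, (1 <= N)%N &
    forall q : 'cV[int]_n, (1 <= normZ q <= N)%N -> eps / D N <= distZ (AqG A q g) ^+ m].
  move=> N0; have [T [hT hb]] := bad (N0.+1 ^ n)%N.
  have exP : exists N, (N ^ n <= T)%N by exists 0%N; rewrite exp0n.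
  have ubP : forall N, (N ^ n <= T)%N -> (N <= T)%N.
    by move=> N h; apply: leq_trans h; apply: le_pow_self.
  case: (ex_maxnP exP ubP) => N hN hmax.
  have hN1 : (T < N.+1 ^ n)%N by rewrite ltnNge; apply/negP => /hmax; rewrite ltnn.
  have hN0 : (N0.+1 <= N)%N by apply: hmax.
  exists N; split => //; first by apply: leq_trans hN0; apply: leqW.
    by apply: leq_trans hN0.
  move=> q /andP [hq1 hq2].
  have := hb q; rewrite expn_gt0 hq1 /= (leq_trans _ hN) ?leq_exp2r // => /(_ isT) h.
  apply: le_trans h; rewrite /psi1 ler_pM2l //.
  have hT0 : (0 < T)%N by apply: leq_trans hT; rewrite expn_gt0.
  rewrite lef_pV2 ?posrE ?ltr0n ?expn_gt0 ?muln_gt0 ?(leq_trans _ hN0) // ler_nat.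
  apply: leq_trans (ltnW hN1) _; rewrite leq_exp2r //.
  have : (1 <= N)%N by apply: leq_trans hN0.
  lia.
have [f hf] := choice goodN.
pose Ns (k : nat) : nat := iter k (fun x => f (2 * x)%N) (f 1%N).
have NsS k : Ns k.+1 = f (2 * Ns k)%N by [].
have hNs k : (1 <= Ns k)%N /\ forall q : 'cV[int]_n,
    (1 <= normZ q <= Ns k)%N -> eps / D (Ns k) <= distZ (AqG A q g) ^+ m.
  case: k => [|k]; first by case: (hf 1%N).
  by rewrite NsS; case: (hf (2 * Ns k)%N).
have hstep k : (2 * Ns k <= Ns k.+1)%N by rewrite NsS; case: (hf (2 * Ns k)%N).
have hmono k d : (Ns k <= Ns (k + d))%N.
  elim: d => [|d IH]; first by rewrite addn0.
  apply: leq_trans IH _; rewrite addnS; apply: leq_trans (hstep _); lia.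
have hmono' k k' : (k <= k')%N -> (Ns k <= Ns k')%N.
  by move=> hk; rewrite -(subnKC hk); apply: hmono.
have hge k : (k <= Ns k)%N.
  elim: k => [|k IH] //; have := hstep k; have := (hNs k).1; lia.
have exP : forall j, exists k, (j <= Ns k)%N by move=> j; exists j.
pose kk j := ex_minn (exP j).
have hk1 j : (j <= Ns (kk j))%N by rewrite /kk; case: ex_minnP.
have hk2 j i : (j <= Ns i)%N -> (kk j <= i)%N by rewrite /kk; case: ex_minnP => k _ h /h.

have Dpos k : (1 <= k)%N -> 0 < D k by move=> hk; rewrite /D ltr0n expn_gt0 muln_gt0 hk.
pose psi (j : nat) : R := rt m (eps / D (Ns (kk j))).
have epsD k : 0 <= eps / D (Ns k).
  by apply: divr_ge0; [exact: ltW | exact/ltW/Dpos/(hNs k).1].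
have psim j : psi j ^+ m = eps / D (Ns (kk j)) by rewrite rtK.
have hDc : D_class m n psi.
  split; first split => [k|a b ha hab]; first exact: rt_ge0.
    apply: rt_le => //; rewrite ler_pM2l // lef_pV2 ?posrE ?Dpos ?(hNs _).1 //.
    rewrite /D ler_nat leq_exp2r // leq_mul2l hmono' ?orbT //.
    exact/hk2/(leq_trans hab (hk1 b)).
  pose dl : R := eps / ((2 ^ n * 2 * n)%N)%:R.
  have dlpos : 0 < dl by rewrite divr_gt0 // ltr0n !muln_gt0 expn_gt0.
  have key : forall K : nat, K%:R * dl <=
      \sum_(1 <= j < (Ns K).+1) (j%:R : R) ^+ (n - 1) * psi j ^+ m.
    elim => [|K IH].
      by rewrite mul0r; apply: sumr_ge0 => j _; rewrite mulr_ge0 ?exprn_ge0 ?rt_ge0.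
    have hab : (Ns K <= Ns K.+1)%N by apply: hmono'.
    rewrite (@big_cat_nat _ _ _ (Ns K).+1) //.
    have -> : (K.+1%:R : R) * dl = K%:R * dl + dl by rewrite -addn1 natrD mulrDl mul1r.
    apply: lerD => //.
    set a := Ns K; set b := Ns K.+1.
    have Db : 0 < D b by apply/Dpos/(hNs _).1.
    apply: (@le_trans _ _ (\sum_(a.+1 <= j < b.+1) (j%:R : R) ^+ (n - 1) * (eps / D b))).
      rewrite -mulr_suml (eq_bigr (fun j => ((j ^ (n-1))%N)%:R)); last by move=> j _; rewrite natrX.
      rewrite -natr_sum.
      set S := (\sum_(a.+1 <= j < b.+1) j ^ (n - 1))%N.
      have ha : (1 <= a)%N by exact: (hNs K).1.
      have h2a : (2 * a <= b)%N by exact: hstep.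
      have ht := @tele a (b - a) n hn; rewrite subnKC // -/S in ht.
      have h2n : (2 <= 2 ^ n)%N by rewrite -{1}(expn1 2) leq_pexp2l.
      have hXY : (2 ^ n * a ^ n <= b ^ n)%N by rewrite -expnMn leq_exp2r.
      have hX : (b ^ n <= 2 * n * S)%N.
        have : (2 * a ^ n <= 2 ^ n * a ^ n)%N by rewrite leq_mul2r h2n orbT.
        nia.
      rewrite /dl mulrCA ler_pM2l // ler_pdivlMr // ler_pdivrMl; last first.
        by rewrite ltr0n !muln_gt0 expn_gt0.
      rewrite -natrM ler_nat /D expnMn.
      have : (2 ^ n * b ^ n <= 2 ^ n * (2 * n * S))%N by rewrite leq_mul2l hX orbT.
      nia.
    apply: ler_sum_nat => j /andP [hj1 hj2].
    rewrite ler_wpM2l ?exprn_ge0 // psim ler_pM2l // lef_pV2 ?posrE ?Dpos ?(hNs _).1 //.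
    rewrite /D ler_nat leq_exp2r // leq_mul2l hmono' ?orbT //.
    by apply: hk2; rewrite -ltnS.
  apply/eqyP => B hB.
  set K := Num.bound (B / dl).
  have hK : B / dl < K%:R by apply: archi_boundP; rewrite divr_ge0 // ltW.
  apply: le_trans (nneseries_lim_ge (Ns K).+1 _); last first.
    by move=> k _ _; rewrite lee_fin mulr_ge0 ?exprn_ge0 ?rt_ge0.
  rewrite sumEFin lee_fin; apply: le_trans (key K).
  by rewrite -ler_pdivrMr // ltW.
apply: (hW psi hDc).
apply: (sub_finite_set _ (finite_set1 0)) => q /= hq.
case hj: (normZ q) => [|j]; first exact: normZ0.
exfalso; move: hq; rewrite hj; apply/negP; rewrite -leNgt.
apply: rt_lower => //; first exact: distZ_ge0.
by apply: (hNs _).2; rewrite hj /= hk1.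
Qed.
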